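(* Assume the structural model (F2) and that $\pi_{b.a}>0$ for all $a,b\in\{0,1\}$ (and that the denominators below are positive). Then the following bounds are valid and sharp: $$1-\frac{1-p_{00.1}}{p_{10.0}}\le VE(0)\le 1-\frac{p_{10.1}}{1-p_{00.0}},$$ $$1-\frac{1-p_{01.1}}{p_{11.0}}\le VE(1)\le 1-\frac{p_{11.1}}{1-p_{01.0}},$$ $$1-\frac{1-p_{01.1}}{p_{10.0}}\le VE_T\le 1-\frac{p_{11.1}}{1-p_{00.0}}.$$
   Context: Variables: randomized vaccine assignment $A\in\{0,1\}$; message $M\in\{-1,0,1\}$ ($M=-1$: blinded; $M=1$: told vaccinated; $M=0$: told unvaccinated); belief $B\in\{0,1\}$ ($B=1$: believes vaccinated); adverse-event indicator $S\in\{0,1\}$; infection indicator $Y\in\{0,1\}$; an unmeasured real-valued random variable $U$. For $a\in\{0,1\}$, $m\in\{-1,0,1\}$, $Y^{a,m},B^{a,m},S^{a,m}$ denote the potential values of $Y,B,S$ under the joint intervention $A=a,M=m$ in the structural model. The observed data come from a two-arm trial in which $A$ is randomized and $M=-1$ with probability one, so the observed vector is $(A,S,B,Y)=(A,S^{A,-1},B^{A,-1},Y^{A,-1})$. Estimands: $VE(m)=1-E(Y^{1,m})/E(Y^{0,m})$ for $m\in\{0,1\}$ and $VE_T=1-E(Y^{1,1})/E(Y^{0,0})$. Observed-data notation (two-arm trial): $p_{y.a}=\Pr(Y=y\mid A=a)$, $p_{y.ab}=\Pr(Y=y\mid A=a,B=b)$, $p_{y.abs}=\Pr(Y=y\mid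 A=a,B=b,S=s)$, $p_{yb.a}=\Pr(Y=y,B=b\mid A=a)$, $p_{yb.as}=\Pr(Y=y,B=b\mid A=a,S=s)$, $\pi_{b.a}=\Pr(B=b\mid A=a)$, $\pi_{b.as}=\Pr(B=b\mid A=a,S=s)$, $\gamma_{s.a}=\Pr(S=s\mid A=a)$. Bounds $L\le\theta\le R$ (functions of the observed law) are valid if for every structural model in the stated class satisfying the stated assumptions and inducing the given observed law, $\theta\in[L,R]$; they are sharp if every value in $[L,R]$ is attained by some such model. Structural model (F2): nonparametric structural equations with mutually independent errors: $A=f_A(\varepsilon_A)$, $U=f_U(\varepsilon_U)$, $M=f_M(\varepsilon_M)$, $B=M$ if $M\neq-1$ and $B=f_B(A,U,\varepsilon_B)$ if $M=-1$, $Y=f_Y(A,B,U,\varepsilon_Y)$, with arbitrary functions $f_\cdot$; potential outcomes are obtained by setting $A=a$, $M=m$ in these equations (so $B^{a,m}=m$ for $m\in\{0,1\}$). $S$ is not used. *)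

(* Defs.v *)
From HB Require Import structures.
From mathcomp Require Import all_boot all_order all_algebra.
From mathcomp Require Import all_classical all_reals all_analysis.

Set Implicit Arguments.
Unset Strict Implicit.
Unset Printing Implicit Defensive.
Import Order.TTheory GRing.Theory Num.Theory.
Local Open Scope classical_set_scope.
Local Open Scope ring_scope.

(* The message M in {-1,0,1}:  blinded  <-> M = -1,
                               told true  <-> M = 1 (told vaccinated),
                               told false <-> M = 0 (told unvaccinated). *)
Inductive msg := blinded | told of bool.

(* Binary variables are encoded by bool: true <-> 1, false <-> 0. *)

(* Errors eps_A, eps_U, eps_M, eps_B, eps_Y take values in arbitrary
   measurable spaces and are mutually independent (product rule over all
   measurable events; taking some events to be the whole space gives the
   product rule for every subfamily). *)
Record F2model (R : realType) := F2Model {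
  dO : measure_display; Omega : measurableType dO; Pr : probability Omega R;
  dA : measure_display; EA : measurableType dA;
  dU : measure_display; EU : measurableType dU;
  dM : measure_display; EM : measurableType dM;
  dB : measure_display; EB : measurableType dB;
  dY : measure_display; EY : measurableType dY;
  epsA : Omega -> EA; epsU : Omega -> EU; epsM : Omega -> EM;
  epsB : Omega -> EB; epsY : Omega -> EY;
  fA : EA -> bool;
  fU : EU -> R;
  fM : EM -> msg;
  fB : bool -> R -> EB -> bool;
  fY : bool -> bool -> R -> EY -> bool;
  epsA_meas : measurable_fun setT epsA;
  epsU_meas : measurable_fun setT epsU;
  epsM_meas : measurable_fun setT epsM;
  epsB_meas : measurable_fun setT epsB;
  epsY_meas : measurable_fun setT epsY;
  fA_meas : forall a, measurable (fA @^-1` [set a]);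
  fU_meas : measurable_fun setT fU;
  fM_meas : forall m, measurable (fM @^-1` [set m]);
  fB_meas : forall a b, measurable [set p : R * EB | fB a p.1 p.2 = b];
  fY_meas : forall a b y, measurable [set p : R * EY | fY a b p.1 p.2 = y];
  eps_indep : forall (SA : set EA) (SU : set EU) (SM : set EM)
      (SB : set EB) (SY : set EY),
      measurable SA -> measurable SU -> measurable SM ->
      measurable SB -> measurable SY ->
      Pr (epsA @^-1` SA `&` epsU @^-1` SU `&` epsM @^-1` SM
          `&` epsB @^-1` SB `&` epsY @^-1` SY) =
      (Pr (epsA @^-1` SA) * Pr (epsU @^-1` SU) * Pr (epsM @^-1` SM)
       * Pr (epsB @^-1` SB) * Pr (epsY @^-1` SY))%E
}.

Section F2defs.
Variables (R : realType) (m : F2model R).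

Definition Avar (w : Omega m) : bool := @fA _ m (@epsA _ m w).
Definition Uvar (w : Omega m) : R := @fU _ m (@epsU _ m w).
Definition Mvar (w : Omega m) : msg := @fM _ m (@epsM _ m w).
Definition Bvar (w : Omega m) : bool :=
  match Mvar w with told b => b | blinded => @fB _ m (Avar w) (Uvar w) (@epsB _ m w) end.
Definition Yvar (w : Omega m) : bool := @fY _ m (Avar w) (Bvar w) (Uvar w) (@epsY _ m w).

(* potential outcome Y^{a,mm} for mm in {0,1} (encoded as a bool):
   setting A = a, M = mm gives B^{a,mm} = mm *)
Definition Ypot (a mm : bool) (w : Omega m) : bool :=
  @fY _ m a mm (Uvar w) (@epsY _ m w).

Definition prob (S : set (Omega m)) : R := fine (@Pr _ m S).

Definition EYpot (a mm : bool) : R := prob [set w | Ypot a mm w = true].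

Definition blinded_trial : Prop := @Pr _ m [set w | Mvar w = blinded] = 1%E.

Definition obs_joint (a b y : bool) : R :=
  prob [set w | Avar w = a /\ Bvar w = b /\ Yvar w = y].
Definition pA (a : bool) : R := prob [set w | Avar w = a].

Definition p_yb_a (y b a : bool) : R := obs_joint a b y / pA a.
Definition pi_b_a (b a : bool) : R :=
  prob [set w | Avar w = a /\ Bvar w = b] / pA a.

Definition VE (mm : bool) : R := 1 - EYpot true mm / EYpot false mm.
Definition VE_T : R := 1 - EYpot true true / EYpot false false.

End F2defs.

Definition same_obs_law (R : realType) (m1 m2 : F2model R) : Prop :=
  forall a b y : bool, obs_joint m1 a b y = obs_joint m2 a b y.

(* Main.v *)
Require Import Defs.
From HB Require Import structures.
From mathcomp Require Import all_boot all_order all_algebra.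
From mathcomp Require Import all_classical all_reals all_analysis.
From mathcomp Require Import ring lra measurable_realfun.
Import Order.TTheory GRing.Theory Num.Theory.
Set Implicit Arguments.
Unset Strict Implicit.
Local Open Scope classical_set_scope.
Local Open Scope ring_scope.

Lemma mpre d1 d2 (T1 : measurableType d1) (T2 : measurableType d2) (f : T1 -> T2) :
  measurable_fun setT f -> forall S, measurable S -> measurable (f @^-1` S).
Proof. by move=> mf S mS; rewrite -[_ @^-1` _]setTI; exact: mf. Qed.

Lemma indep_ext d dA d1 d2 (Om : measurableType d) (TA : measurableType dA)
  (T1 : measurableType d1) (T2 : measurableType d2) (R : realType)
  (P : probability Om R) (X : Om -> TA) (Y : Om -> T1) (Z : Om -> T2) :
  measurable_fun setT X -> measurable_fun setT Y -> measurable_fun setT Z ->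
  (forall SA S1 S2, measurable SA -> measurable S1 -> measurable S2 ->
   P (X @^-1` SA `&` Y @^-1` S1 `&` Z @^-1` S2) =
   P (X @^-1` SA) * P (Y @^-1` S1 `&` Z @^-1` S2))%E ->
  forall SA S, measurable SA -> measurable S ->
  P (X @^-1` SA `&` (fun w => (Y w, Z w)) @^-1` S) =
  (P (X @^-1` SA) * P ((fun w => (Y w, Z w)) @^-1` S))%E.
Proof.
move=> mX mY mZ H SA S mSA mS.
set W := fun w => (Y w, Z w).
have mW : measurable_fun setT W by exact: measurable_fun_pair.
have mXA : measurable (X @^-1` SA) by exact: mpre.
have c0 : (0 <= fine (P (X @^-1` SA)))%R by apply: fine_ge0; exact: measure_ge0.
have cE : ((fine (P (X @^-1` SA)))%:E = P (X @^-1` SA)).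
  by rewrite fineK // fin_num_measure.
pose m1 : {measure set (T1 * T2) -> \bar R} := pushforward (mrestr P mXA) W.
pose m2 : {measure set (T1 * T2) -> \bar R} := mscale (NngNum c0) (pushforward P W).
have := @g_sigma_algebra_measure_unique _ R _
  [set A `*` B | A in measurable & B in measurable] _ (fun=> setT) _ _
  (m1 mW) (m2 mW) _ _ _ S.
rewrite /= /mscale /mrestr /pushforward /= cE => HH; rewrite setIC; apply: HH.
- by move=> _ [A mA [B mB <-]]; exact: measurableX.
- by move=> _; exists setT => //; exists setT => //; rewrite setXTT.
- by apply/seteqP; split => // x _; exists 0%N.
- move=> _ _ [A mA [B mB <-]] [C mC [D mD <-]].
  exists (A `&` C); first exact: measurableI.
  exists (B `&` D); first exact: measurableI.
  by rewrite setXI.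
- move=> _ [A mA [B mB <-]] /=.
  have -> : W @^-1` (A `*` B) = Y @^-1` A `&` Z @^-1` B by [].
  by rewrite setIC setIA H.
- move=> k.
  apply: (le_lt_trans (probability_le1 _ _)); last by rewrite ltry.
  apply: measurableI => //; exact: mpre.
- by rewrite -measurable_prod_measurableType.
Qed.
Section G.
Context d (T : measurableType d) (R : realType) (P : probability T R).
Definition pr (S : set T) : R := fine (P S).
Lemma prE S : measurable S -> P S = (pr S)%:E.
Proof. by move=> mS; rewrite /pr fineK // fin_num_measure. Qed.
Lemma pr_ge0 S : 0 <= pr S.
Proof. by apply: fine_ge0; exact: measure_ge0. Qed.
Lemma pr_le1 S : measurable S -> pr S <= 1.
Proof. by move=> mS; have := probability_le1 P mS; rewrite prE // lee_fin. Qed.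
Lemma prT : pr setT = 1.
Proof. by rewrite /pr probability_setT. Qed.
Lemma prU A B : measurable A -> measurable B -> A `&` B = set0 ->
  pr (A `|` B) = pr A + pr B.
Proof.
move=> mA mB AB; rewrite /pr measureU // fineD // fin_num_measure //.
Qed.
Lemma pr_le A B : measurable A -> measurable B -> A `<=` B -> pr A <= pr B.
Proof.
move=> mA mB AB; have := @le_measure _ _ _ P A B.
rewrite !inE => /(_ mA mB AB); rewrite -lee_fin -prE // -prE //.
Qed.
Lemma pr_split {Q F} : measurable Q -> measurable F ->
  pr Q = pr (Q `&` F) + pr (Q `&` ~` F).
Proof.
move=> mQ mF; rewrite -prU; [|exact: measurableI|apply: measurableI => //; exact: measurableC|].
- by rewrite -setIUr setUCr setIT.
- by rewrite setIACA setICr setI0.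
Qed.
Lemma prC A : measurable A -> pr (~` A) = 1 - pr A.
Proof.
move=> mA; have := pr_split measurableT mA; rewrite prT !setTI => ->.
lra.
Qed.
End G.

Section M.
Context (R : realType) (m : F2model R).
Local Notation P := (@Pr R m).
Local Notation Av := (@Avar R m).
Local Notation Bv := (@Bvar R m).
Local Notation Yv := (@Yvar R m).
Local Notation Mv := (@Mvar R m).
Local Notation Uv := (@Uvar R m).
Local Notation Yp := (@Ypot R m).
Local Notation eB := (@epsB R m).

Lemma mUv : measurable_fun setT (Uv).
Proof. exact: measurableT_comp (@fU_meas R m) (@epsU_meas R m). Qed.

Lemma mAe a : measurable [set w | Av w = a].
Proof. by have := mpre (@epsA_meas R m) (@fA_meas R m a). Qed.

Lemma mMe mm : measurable [set w | Mv w = mm].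
Proof. by have := mpre (@epsM_meas R m) (@fM_meas R m mm). Qed.

Lemma mFB a b : measurable [set w | @fB R m a (Uv w) (eB w) = b].
Proof.
have := mpre (measurable_fun_pair mUv (@epsB_meas R m)) (@fB_meas R m a b).
by [].
Qed.

Lemma mYp a b y : measurable [set w | Yp a b w = y].
Proof.
have := mpre (measurable_fun_pair mUv (@epsY_meas R m)) (@fY_meas R m a b y).
by [].
Qed.

Lemma mBe b : measurable [set w | Bv w = b].
Proof.
have -> : [set w | Bv w = b] =
  [set w | Mv w = told b] `|` ([set w | Mv w = blinded] `&`
   (([set w | Av w = true] `&` [set w | @fB R m true (Uv w) (eB w) = b])
    `|` ([set w | Av w = false] `&` [set w | @fB R m false (Uv w) (eB w) = b]))).
  apply/seteqP; split => w /=; rewrite /Bvar.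
    case: (Mv w) => [|c] H.
      right; split => //; case E: (Av w) H => H; [left|right]; by split.
    by left; rewrite H.
  case: (Mv w) => [|c].
    by case=> [//|[_ [[E H]|[E H]]]]; rewrite E.
  by case=> [[->]//|[]].
apply: measurableU; first exact: mMe.
apply: measurableI; first exact: mMe.
by apply: measurableU; apply: measurableI; (exact: mAe || exact: mFB).
Qed.

Lemma mYe y : measurable [set w | Yv w = y].
Proof.
have -> : [set w | Yv w = y] =
  \big[setU/set0]_(a <- [:: true; false]) \big[setU/set0]_(b <- [:: true; false])
   ([set w | Av w = a] `&` [set w | Bv w = b] `&` [set w | Yp a b w = y]).
  rewrite !big_cons !big_nil !setU0.
  apply/seteqP; split => w /=; rewrite /Yvar /Ypot.
    by case: (Av w); case: (Bv w) => ?;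
      [left;left|left;right|right;left|right;right].
  by case=> [[]|[]] [[-> ->]].
rewrite !big_cons !big_nil !setU0.
by apply: measurableU; apply: measurableU; apply: measurableI;
  (apply: measurableI || idtac); (exact: mAe || exact: mBe || exact: mYp).
Qed.

Lemma mOe a b y : measurable [set w | Av w = a /\ Bv w = b /\ Yv w = y].
Proof. by apply: measurableI; [exact: mAe|apply: measurableI; [exact: mBe|exact: mYe]]. Qed.


Lemma pr_bool (Q : set (Omega m)) (f : Omega m -> bool) : measurable Q ->
  measurable [set w | f w = true] ->
  pr P Q = pr P (Q `&` [set w | f w = true]) + pr P (Q `&` [set w | f w = false]).
Proof.
move=> mQ mF; rewrite (pr_split P mQ mF); congr (_ + pr P (_ `&` _)).
by apply/seteqP; split => w /=; case: (f w).
Qed.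

Lemma F_AB a b : pr P [set w | Av w = a /\ Bv w = b] =
  obs_joint m a b true + obs_joint m a b false.
Proof.
rewrite (@pr_bool _ Yv); [|by apply: measurableI; [exact: mAe|exact: mBe]|exact: mYe].
by congr (pr P _ + pr P _); apply/seteqP; split => w /=; tauto.
Qed.

Lemma F_A a : pA m a = pr P [set w | Av w = a /\ Bv w = true] +
  pr P [set w | Av w = a /\ Bv w = false].
Proof.
rewrite /pA /prob -/(pr P _) (@pr_bool _ Bv); [|exact: mAe|exact: mBe].
by congr (pr P _ + pr P _); apply/seteqP; split => w /=; tauto.
Qed.

Lemma F_tot : pA m true + pA m false = 1.
Proof.
rewrite /pA /prob -/(pr P _) -/(pr P _).
rewrite [RHS](_ : 1 = pr P setT); last by rewrite prT.
rewrite [RHS](@pr_bool setT Av) ?setTI //; exact: mAe.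
Qed.

Lemma pA_ge0 a : 0 <= pA m a.
Proof. exact: pr_ge0. Qed.

Lemma obs_ge0 a b y : 0 <= obs_joint m a b y.
Proof. exact: pr_ge0. Qed.

Lemma indepAY a b y : pr P ([set w | Av w = a] `&` [set w | Yp a b w = y]) =
  pA m a * pr P [set w | Yp a b w = y].
Proof.
have Hind : forall SA S1 S2, measurable SA -> measurable S1 -> measurable S2 ->
   P ((@epsA R m) @^-1` SA `&` (@epsU R m) @^-1` S1 `&` (@epsY R m) @^-1` S2) =
   (P ((@epsA R m) @^-1` SA) * P ((@epsU R m) @^-1` S1 `&` (@epsY R m) @^-1` S2))%E.
  move=> SA S1 S2 mSA mS1 mS2.
  have := @eps_indep R m SA S1 setT setT S2 mSA mS1 measurableT measurableT mS2.
  rewrite !preimage_setT !setIT probability_setT !mule1 => ->.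
  have := @eps_indep R m setT S1 setT setT S2 measurableT mS1 measurableT measurableT mS2.
  rewrite !preimage_setT !setIT !setTI probability_setT !mule1 !mul1e => ->.
  by rewrite muleA.
have H := @indep_ext _ _ _ _ _ _ _ _ _ P (@epsA R m) (@epsU R m) (@epsY R m)
  (@epsA_meas R m) (@epsU_meas R m) (@epsY_meas R m) Hind.
have mg : measurable_fun setT (fun p : EU m * EY m => (@fU R m p.1, p.2)).
  apply: measurable_fun_pair; last exact: measurable_snd.
  exact: measurableT_comp (@fU_meas R m) measurable_fst.
have mS := mpre mg (@fY_meas R m a b y).
have := H _ _ (@fA_meas R m a) mS.
rewrite /pA /prob /pr => {}H.
have -> : [set w | Av w = a] `&` [set w | Yp a b w = y] =
  (@epsA R m) @^-1` ((@fA R m) @^-1` [set a]) `&`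
  (fun w => (@epsU R m w, @epsY R m w)) @^-1`
    ((fun p : EU m * EY m => (@fU R m p.1, p.2)) @^-1` [set p | @fY R m a b p.1 p.2 = y]) by [].
rewrite H fineM //; apply: fin_num_measure => //.
  by have := mAe a.
by have := mYp a b y.
Qed.

Lemma obs_le a b y : obs_joint m a b y <= pA m a * pr P [set w | Yp a b w = y].
Proof.
rewrite -indepAY /obs_joint /prob -/(pr P _).
apply: pr_le; [exact: mOe|apply: measurableI; [exact: mAe|exact: mYp]|].
move=> w [Ha [Hb Hy]]; split => //=.
by move: Hy; rewrite /Yvar Ha Hb.
Qed.

Lemma Yp_false a b : pr P [set w | Yp a b w = false] = 1 - EYpot m a b.
Proof.
rewrite /EYpot /prob -/(pr P _) -prC; last exact: mYp.
by congr (pr P _); apply/seteqP; split => w /=; case: (Yp a b w).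
Qed.

Lemma pA_gt0 : (forall a b, 0 < pi_b_a m b a) -> forall a, 0 < pA m a.
Proof.
move=> h a; have := h a true; rewrite /pi_b_a lt0r => /andP[+ _].
rewrite lt0r pA_ge0 andbT; apply: contra => /eqP ->.
by rewrite invr0 mulr0.
Qed.

Lemma EY_lo a b : 0 < pA m a -> p_yb_a m true b a <= EYpot m a b.
Proof.
move=> hp; rewrite /p_yb_a ler_pdivrMr // mulrC.
exact: obs_le.
Qed.

Lemma EY_hi a b : 0 < pA m a -> EYpot m a b <= 1 - p_yb_a m false b a.
Proof.
move=> hp; have := obs_le a b false; rewrite Yp_false /p_yb_a.
move=> h; have : obs_joint m a b false / pA m a <= 1 - EYpot m a b.
  by rewrite ler_pdivrMr // mulrC.
lra.
Qed.
End M.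

Section U.
Context (R : realType).
Local Notation U01 := (uniform_prob (@ltr01 R) : probability _ R).


Lemma U01_lt (t : R) : 0 <= t <= 1 -> U01 [set u : measurableTypeR R | u < t] = t%:E.
Proof.
move=> /andP[t0 t1].
rewrite /= /uniform_prob integral_uniform_pdf.
have -> : [set u | u < t] `&` `[0, 1] = `[0, t[%classic :> set R.
  apply/seteqP; split => u /=; rewrite !in_itv /=.
    by move=> [ut /andP[-> _]].
  move=> /andP[u0 ut]; split => //; apply/andP; split => //.
  by apply: ltW; apply: lt_le_trans ut t1.
rewrite (eq_integral (cst 1%:E)); last first.
  move=> x; rewrite inE/= in_itv/= /uniform_pdf => /andP[x0 xt].
  by rewrite x0 /= (ltW (lt_le_trans xt t1)) /= subr0 invr1.
rewrite integral_cst//= lebesgue_measure_itv/= lte_fin.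
rewrite mul1e oppr0 adde0; case: ifPn => // /negP tle.
by have -> : t = 0 by apply/eqP; rewrite eq_le t0 andbT leNgt; apply/negP.
Qed.

Lemma measurable_lt_set (t : R) (b : bool) : measurable [set u : R | (u < t) = b].
Proof.
have mf : measurable_fun setT (fun u : R => u < t).
  by apply: measurable_fun_ltr => //.
have := mf measurableT [set b] I.
by rewrite setTI.
Qed.

Lemma U01_ltb (t : R) (b : bool) : 0 <= t <= 1 ->
  U01 [set u : measurableTypeR R | (u < t) = b] = (if b then t else 1 - t)%:E.
Proof.
move=> t01; case: b.
  by rewrite -U01_lt //; congr (U01 _); apply/seteqP; split => u /=.
have -> : [set u : measurableTypeR R | (u < t) = false] = ~` [set u : measurableTypeR R | u < t].
  by apply/seteqP; split => u /=; case: (u < t).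
rewrite probability_setC; last exact: (measurable_lt_set t true).
by rewrite U01_lt.
Qed.

Lemma bern_set1 (p : R) (a : bool) : 0 <= p <= 1 ->
  bernoulli_prob p [set a] = (if a then p else 1 - p)%:E.
Proof.
move=> p01; rewrite bernoulli_probE // !diracE.
by case: a; rewrite /= ?in_set1 ?mem_set //= ?memNset //= ?mule1 ?mule0 ?adde0 ?add0e.
Qed.

End U.

Section Mk.
Context (R : realType).
Local Notation RL := (measurableTypeR R).
Local Notation U01 := (uniform_prob (@ltr01 R) : probability _ R).
Variables (pa : R) (thr : bool -> R) (c q : bool -> bool -> R).

Definition Om := (bool * (RL * RL))%type.
Definition PrM : probability Om R :=
  ((bernoulli_prob pa : probability bool R) \x (U01 \x U01))%E.
Definition fBm (a : bool) (u : R) (_ : bool) : bool := u < thr a.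
Definition fYm (a b : bool) (u : R) (e : RL) : bool :=
  if (u < thr a) == b then (e : R) < c a b else (e : R) < q a b.

Lemma epsA_m : measurable_fun setT (@fst bool (RL * RL)).
Proof. exact: measurable_fst. Qed.
Lemma epsU_m : measurable_fun setT (fun w : Om => w.2.1).
Proof. exact: measurableT_comp measurable_fst measurable_snd. Qed.
Lemma epsY_m : measurable_fun setT (fun w : Om => w.2.2).
Proof. exact: measurableT_comp measurable_snd measurable_snd. Qed.
Lemma epsc_m : measurable_fun setT (fun w : Om => true).
Proof. exact: measurable_cst. Qed.
Lemma fA_m : forall a : bool, measurable ((@id bool) @^-1` [set a]).
Proof. by []. Qed.
Lemma fU_m : measurable_fun setT (fun u : RL => (u : R)).
Proof. by move=> _ S mS; rewrite setTI. Qed.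
Lemma fM_m : forall mm, measurable ((fun _ : bool => blinded) @^-1` [set mm]).
Proof. by []. Qed.
Lemma fB_m : forall a b, measurable [set p : R * bool | fBm a p.1 p.2 = b].
Proof.
move=> a b; have -> : [set p : R * bool | fBm a p.1 p.2 = b] =
  [set u : R | (u < thr a) = b] `*` setT.
  by apply/seteqP; split => -[u e]; rewrite /fBm /=; [move=> ->|move=> [-> _]].
by apply: measurableX => //; exact: measurable_lt_set.
Qed.
Lemma fY_m : forall a b y, measurable [set p : R * RL | fYm a b p.1 p.2 = y].
Proof.
move=> a b y; have -> : [set p : R * RL | fYm a b p.1 p.2 = y] =
  ([set u : R | (u < thr a) = b] `*` [set e : RL | ((e : R) < c a b) = y]) `|`
  ([set u : R | (u < thr a) = ~~ b] `*` [set e : RL | ((e : R) < q a b) = y]).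
  apply/seteqP; split => -[u e]; rewrite /fYm /=;
    case: (u < thr a); case: b => /=;
    (move=> [[h1 h2]|[h1 h2]] || move=> h);
    (by [] || (by left; split) || (by right; split) || idtac).
by apply: measurableU; apply: measurableX; exact: measurable_lt_set.
Qed.

Definition Pb : probability bool R := bernoulli_prob pa.
Definition PU : probability RL R := U01.

Lemma PrX A B C : measurable A -> measurable B -> measurable C ->
  PrM (A `*` (B `*` C)) = (Pb A * (PU B * PU C))%E.
Proof.
move=> mA mB mC.
have h1 := product_measure1E (bernoulli_prob pa : probability bool R) ((U01 \x U01)%E : probability _ R) mA (measurableX mB mC).
have h2 : ((U01 \x U01)%E : probability _ R) (B `*` C) = (U01 B * U01 C)%E := product_measure1E U01 U01 mB mC.
apply: (etrans h1); congr (_ * _)%E; exact: h2.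
Qed.

End Mk.

Section Gen.
Context (R : realType).
Local Notation RL := (measurableTypeR R).
Local Notation Om' := (bool * (RL * RL))%type.
Variables (P : probability (Om') R) (P1 : probability bool R) (P2 P3 : probability RL R).
Hypothesis HX : forall A B C, measurable A -> measurable B -> measurable C ->
  P (A `*` (B `*` C)) = (P1 A * (P2 B * P3 C))%E.

Lemma indep_gen (SA : set bool) (SU : set RL) (SM SB : set bool) (SY : set RL) :
  measurable SA -> measurable SU -> measurable SM -> measurable SB -> measurable SY ->
  P (@fst bool (RL * RL) @^-1` SA `&` (fun w : Om' => w.2.1) @^-1` SU
    `&` (fun _ : Om' => true) @^-1` SM `&` (fun _ : Om' => true) @^-1` SB
    `&` (fun w : Om' => w.2.2) @^-1` SY) =
  (P (@fst bool (RL * RL) @^-1` SA) * P ((fun w : Om' => w.2.1) @^-1` SU)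
   * P ((fun _ : Om' => true) @^-1` SM) * P ((fun _ : Om' => true) @^-1` SB)
   * P ((fun w : Om' => w.2.2) @^-1` SY))%E.
Proof.
move=> mA mU mM mB mY.
have cst0 (S : set bool) : ~ S true -> (fun _ : Om' => true) @^-1` S = set0.
  by move=> h; apply/seteqP; split => w //=.
have cstT (S : set bool) : S true -> (fun _ : Om' => true) @^-1` S = setT.
  by move=> h; apply/seteqP; split => w //=.
case: (pselect (SM true)) => hM; last first.
  by rewrite (cst0 _ hM) !setI0 !set0I !measure0 mule0 !mul0e.
case: (pselect (SB true)) => hB; last first.
  by rewrite (cst0 _ hB) !setI0 !set0I !measure0 mule0 !mul0e.
rewrite (cstT _ hM) (cstT _ hB) !setIT probability_setT !mule1.
have -> : @fst bool (RL * RL) @^-1` SA `&` (fun w : Om' => w.2.1) @^-1` SU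
    `&` (fun w : Om' => w.2.2) @^-1` SY = SA `*` (SU `*` SY).
  by apply/seteqP; split => -[a [u e]] //=; [case=> [[]]|case=> ? []].
have -> : @fst bool (RL * RL) @^-1` SA = SA `*` (setT `*` setT).
  by apply/seteqP; split => -[a [u e]] //= [].
have -> : (fun w : Om' => w.2.1) @^-1` SU = setT `*` (SU `*` setT).
  by apply/seteqP; split => -[a [u e]] //= [_ []].
have -> : (fun w : Om' => w.2.2) @^-1` SY = setT `*` (setT `*` SY).
  by apply/seteqP; split => -[a [u e]] //= [_ []].
rewrite !HX // !probability_setT !mule1 !mul1e.
by rewrite muleA.
Qed.

End Gen.

Section Mk2.
Context (R : realType).
Local Notation RL := (measurableTypeR R).
Variables (pa : R) (thr : bool -> R) (c q : bool -> bool -> R).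

Definition mkM : F2model R :=
  @F2Model R _ (Om R) (PrM pa) _ bool _ RL _ bool _ bool _ RL
    fst (fun w => w.2.1) (fun _ => true) (fun _ => true) (fun w => w.2.2)
    id (fun u : RL => (u : R)) (fun _ => blinded) (fBm thr) (fYm thr c q)
    (@epsA_m R) (@epsU_m R) (@epsc_m R) (@epsc_m R) (@epsY_m R)
    fA_m (@fU_m R) fM_m (@fB_m R thr) (@fY_m R thr c q)
    (fun SA SU SM SB SY mA mU mM mB mY =>
       indep_gen (@PrX R pa) mA mU mM mB mY).

Lemma mkM_blinded : blinded_trial mkM.
Proof.
rewrite /blinded_trial.
have -> : [set w | @Mvar R mkM w = blinded] = setT by apply/seteqP; split.
exact: probability_setT.
Qed.

Hypotheses (pa01 : 0 <= pa <= 1) (thr01 : forall a, 0 <= thr a <= 1)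
  (c01 : forall a b, 0 <= c a b <= 1) (q01 : forall a b, 0 <= q a b <= 1).

Lemma Pb_set1 a : Pb pa [set a] = (if a then pa else 1 - pa)%:E.
Proof. rewrite /Pb; exact: bern_set1. Qed.

Lemma PU_ltb (t : R) (b : bool) : 0 <= t <= 1 ->
  PU R [set u : RL | (u < t) = b] = (if b then t else 1 - t)%:E.
Proof. by move=> t01; rewrite /PU; exact: U01_ltb. Qed.

Lemma mkM_obs a b y : obs_joint mkM a b y =
  (if a then pa else 1 - pa) * (if b then thr a else 1 - thr a) *
  (if y then c a b else 1 - c a b).
Proof.
rewrite /obs_joint /prob.
have -> : [set w | @Avar R mkM w = a /\ @Bvar R mkM w = b /\ @Yvar R mkM w = y] =
  [set a] `*` ([set u : RL | (u < thr a) = b] `*` [set e : RL | (e < c a b) = y]).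
  apply/seteqP; split => -[a' [u e]]; rewrite /Avar /Bvar /Yvar /Mvar /Uvar /= /fYm /fBm /=.
    by move=> [-> [<- <-]]; rewrite eqxx.
  by move=> [-> [<- <-]]; rewrite eqxx.
have E : forall S, @Pr R mkM S = PrM pa S by [].
rewrite E PrX // ?Pb_set1 ?PU_ltb //; try exact: measurable_lt_set.
by rewrite -!EFinM /= mulrA.
Qed.

Lemma PrXm A B C : measurable A -> measurable B -> measurable C ->
  @Pr R mkM (A `*` (B `*` C)) = (Pb pa A * (PU R B * PU R C))%E.
Proof. exact: PrX. Qed.

Lemma mkM_EY a b : EYpot mkM a b =
  (if b then thr a else 1 - thr a) * c a b + (if b then 1 - thr a else thr a) * q a b.
Proof.
rewrite /EYpot /prob.
have -> : [set w | @Ypot R mkM a b w = true] =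
  (setT `*` ([set u : RL | (u < thr a) = b] `*` [set e : RL | (e < c a b) = true])) `|`
  (setT `*` ([set u : RL | (u < thr a) = ~~ b] `*` [set e : RL | (e < q a b) = true])).
  apply/seteqP; split => -[a' [u e]]; rewrite /Ypot /Uvar /= /fYm /=.
    by case: (u < thr a); case: b => /= h; [left|right|right|left].
  by move=> [[_ [h1 h2]]|[_ [h1 h2]]]; rewrite h1; move: h2; case: b h1 => //= _.
rewrite -/(pr _ _) prU; first last.
- apply/seteqP; split => // -[a' [u e]] [[_ [h1 _]] [_ [h2 _]]].
  by move: h1 h2 => /= ->; case: b => /eqP.
- by apply: measurableX => //; apply: measurableX; exact: measurable_lt_set.
- by apply: measurableX => //; apply: measurableX; exact: measurable_lt_set.
rewrite /pr !PrXm //; try exact: measurable_lt_set.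
rewrite !PU_ltb // probability_setT !mul1e -!EFinM /=.
by case: b.
Qed.
End Mk2.

Section Alg.
Context (R : realFieldType).

Lemma ve_valid (x y lo1 hi1 lo0 hi0 : R) : 0 <= lo1 -> lo1 <= x <= hi1 -> 0 < lo0 ->
  lo0 <= y <= hi0 -> 1 - hi1 / lo0 <= 1 - x / y <= 1 - lo1 / hi0.
Proof.
move=> l1 /andP[x1 x2] l0 /andP[y1 y2].
have y0 : 0 < y by lra.
have h0 : 0 < hi0 by lra.
apply/andP; split; rewrite lerD2l lerN2.
  rewrite ler_pdivrMr // mulrAC ler_pdivlMr //.
  have : 0 <= hi1 by lra.
  nra.
rewrite ler_pdivrMr // mulrAC ler_pdivlMr //.
nra.
Qed.

Lemma t_exists (lo1 hi1 lo0 hi0 r : R) : 0 <= lo1 <= hi1 -> 0 < lo0 <= hi0 ->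
  lo1 / hi0 <= r <= hi1 / lo0 ->
  exists t, 0 <= t <= 1 /\ lo1 + t * (hi1 - lo1) = r * (hi0 - t * (hi0 - lo0)).
Proof.
move=> /andP[l1 lh1] /andP[l0 lh0] /andP[r1 r2].
have h0 : 0 < hi0 by lra.
have rA : lo1 <= r * hi0 by rewrite -ler_pdivrMr.
have rB : r * lo0 <= hi1 by rewrite -ler_pdivlMr.
have r0 : 0 <= r by apply: le_trans r1; apply: divr_ge0 => //; lra.
have rC : 0 <= r * (hi0 - lo0) by apply: mulr_ge0 => //; lra.
set D := (hi1 - lo1) + r * (hi0 - lo0).
have [D0|Dpos] := eqVneq D 0.
  exists 0; split; first by rewrite lexx ler01.
  rewrite /D in D0; have e1 : hi1 = lo1 by lra.
  have e2 : r * hi0 = r * lo0 by nra.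
  rewrite !mul0r subr0 addr0; lra.
have Dp : 0 < D by rewrite lt0r Dpos /D /=; lra.
exists ((r * hi0 - lo1) / D); split.
  apply/andP; split; first by apply: divr_ge0; lra.
  by rewrite ler_pdivrMr // mul1r /D; lra.
apply: (@mulfI _ D) => //.
have -> : D * (lo1 + (r * hi0 - lo1) / D * (hi1 - lo1)) =
  D * lo1 + (r * hi0 - lo1) * (hi1 - lo1) by field.
have -> : D * (r * (hi0 - (r * hi0 - lo1) / D * (hi0 - lo0))) =
  D * r * hi0 - r * (r * hi0 - lo1) * (hi0 - lo0) by field.
rewrite /D; ring.
Qed.
End Alg.

Section Sharp.
Context (R : realType) (m : F2model R).
Hypothesis hpi : forall a b, 0 < pi_b_a m b a.
Local Notation o := (obs_joint m).
Local Notation s a b := (o a b true + o a b false).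

Lemma pApos a : 0 < pA m a.
Proof. exact: pA_gt0. Qed.

Lemma pA_s a : pA m a = s a true + s a false.
Proof. by rewrite F_A !F_AB. Qed.

Lemma s_pos a b : 0 < s a b.
Proof.
have := hpi a b; rewrite /pi_b_a /prob -/(pr _ _) F_AB => h.
have hp := pApos a.
have -> : s a b = (s a b / pA m a) * pA m a by rewrite divfK // gt_eqF.
exact: mulr_gt0.
Qed.

Definition thr a := s a true / pA m a.
Definition cc a b := o a b true / s a b.

Lemma o_ge0 a b y : 0 <= o a b y.
Proof. exact: obs_ge0. Qed.

Lemma pa01 : 0 <= pA m true <= 1.
Proof. by rewrite pA_ge0 /=; have := F_tot m; have := pA_ge0 m false; lra. Qed.

Lemma thr01 a : 0 <= thr a <= 1.
Proof.
have hp := pApos a; have h1 := pA_s a.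
have := o_ge0 a true true; have := o_ge0 a true false;
have := o_ge0 a false true; have := o_ge0 a false false => *.
rewrite /thr; apply/andP; split; first by apply: divr_ge0; lra.
by rewrite ler_pdivrMr // mul1r; lra.
Qed.

Lemma cc01 a b : 0 <= cc a b <= 1.
Proof.
have hs := s_pos a b.
have := o_ge0 a b true; have := o_ge0 a b false => *.
rewrite /cc; apply/andP; split; first by apply: divr_ge0; lra.
by rewrite ler_pdivrMr // mul1r; lra.
Qed.

Lemma model_obs (q : bool -> bool -> R) a b y :
  obs_joint (mkM (pA m true) thr cc q) a b y = o a b y.
Proof.
rewrite mkM_obs; last by apply: cc01. all: try exact: pa01. all: try exact: thr01.
have hp := pApos a; have hs := s_pos a b; have e := pA_s a.
have PA : (if a then pA m true else 1 - pA m true) = pA m a.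
  by case: a {hp hs e} => //; have := F_tot m; lra.
have PB : (if b then thr a else 1 - thr a) = s a b / pA m a.
  rewrite /thr; case: b hs => hs //.
  have hp' : pA m a != 0 by rewrite gt_eqF.
  rewrite e in hp' *; field => //.
have PC : (if y then cc a b else 1 - cc a b) = o a b y / s a b.
  rewrite /cc; case: y => //.
  have hs' : s a b != 0 by rewrite gt_eqF.
  field => //.
rewrite PA PB PC; field.
by rewrite !gt_eqF.
Qed.

Lemma model_EY (q : bool -> bool -> R) a b : (forall a b, 0 <= q a b <= 1) ->
  EYpot (mkM (pA m true) thr cc q) a b =
  p_yb_a m true b a + q a b * ((1 - p_yb_a m false b a) - p_yb_a m true b a).
Proof.
move=> q01; rewrite mkM_EY //; last by apply: cc01. all: try exact: pa01. all: try exact: thr01.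
have hp := pApos a; have hs := s_pos a b; have e := pA_s a.
have hp' : pA m a != 0 by rewrite gt_eqF.
have hs' : s a b != 0 by rewrite gt_eqF.
rewrite /p_yb_a /thr /cc.
rewrite e in hp' *; case: b hs hs' => hs hs'; field; by rewrite hp' hs'.
Qed.

Lemma gap_ge0 a b : 0 <= (1 - p_yb_a m false b a) - p_yb_a m true b a.
Proof.
have hp := pApos a; have e := pA_s a.
have hp' : pA m a != 0 by rewrite gt_eqF.
have -> : (1 - p_yb_a m false b a) - p_yb_a m true b a = s a (~~ b) / pA m a.
  rewrite /p_yb_a; rewrite e in hp' *; case: b; field => //.
apply: divr_ge0; last exact: ltW.
by apply: addr_ge0; apply: o_ge0.
Qed.

Lemma p_ge0 y b a : 0 <= p_yb_a m y b a.
Proof. by apply: divr_ge0; [apply: o_ge0|apply: pA_ge0]. Qed.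

Lemma sharp (b1 b0 : bool) v :
  0 < p_yb_a m true b0 false ->
  1 - (1 - p_yb_a m false b1 true) / p_yb_a m true b0 false <= v <=
  1 - p_yb_a m true b1 true / (1 - p_yb_a m false b0 false) ->
  exists m' : F2model R, blinded_trial m' /\ same_obs_law m m' /\
    1 - EYpot m' true b1 / EYpot m' false b0 = v.
Proof.
move=> hlo0 hv.
have g1 := gap_ge0 true b1; have g0 := gap_ge0 false b0.
have l1 := p_ge0 true b1 true.
set lo1 := p_yb_a m true b1 true in g1 l1 hv *.
set hi1 := 1 - p_yb_a m false b1 true in g1 hv *.
set lo0 := p_yb_a m true b0 false in g0 hlo0 hv *.
set hi0 := 1 - p_yb_a m false b0 false in g0 hv *.
have [t [t01 ht]] : exists t, 0 <= t <= 1 /\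
    lo1 + t * (hi1 - lo1) = (1 - v) * (hi0 - t * (hi0 - lo0)).
  apply: t_exists.
  - by apply/andP; split => //; lra.
  - by apply/andP; split => //; lra.
  - by move: hv => /andP[h1 h2]; apply/andP; split; lra.
pose q := fun a b => if a then (if b == b1 then t else 0) else (if b == b0 then 1 - t else 0).
have q01 : forall a b, 0 <= q a b <= 1.
  move=> [] b; rewrite /q; case: ifP => _; rewrite ?lexx ?ler01 //;
  by move: t01 => /andP[? ?]; apply/andP; split; lra.
exists (mkM (pA m true) thr cc q); split; first exact: mkM_blinded.
split; first by move=> a b y; rewrite model_obs.
rewrite !model_EY // /q !eqxx -/lo1 -/hi1 -/lo0 -/hi0.
have -> : lo0 + (1 - t) * (hi0 - lo0) = hi0 - t * (hi0 - lo0) by ring.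
have hy : hi0 - t * (hi0 - lo0) != 0.
  by apply: lt0r_neq0; move: t01 => /andP[? ?]; nra.
by rewrite ht mulfK //; ring.
Qed.
End Sharp.

Unset Implicit Arguments.
Local Close Scope classical_set_scope.

Theorem proposition1 (R : realType) (m : F2model R) :
  blinded_trial m ->
  (forall a b : bool, 0 < pi_b_a m b a) ->
  0 < p_yb_a m true false false ->
  0 < 1 - p_yb_a m false false false ->
  0 < p_yb_a m true true false ->
  0 < 1 - p_yb_a m false true false ->
  let L0 := 1 - (1 - p_yb_a m false false true) / p_yb_a m true false false in
  let R0 := 1 - p_yb_a m true false true / (1 - p_yb_a m false false false) in
  let L1 := 1 - (1 - p_yb_a m false true true) / p_yb_a m true true false in
  let R1 := 1 - p_yb_a m true true true / (1 - p_yb_a m false true false) in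
  let LT := 1 - (1 - p_yb_a m false true true) / p_yb_a m true false false in
  let RT := 1 - p_yb_a m true true true / (1 - p_yb_a m false false false) in
  (* validity *)
  (L0 <= VE m false <= R0) /\ (L1 <= VE m true <= R1) /\ (LT <= VE_T m <= RT) /\
  (* sharpness *)
  (forall v : R, L0 <= v <= R0 ->
     exists m' : F2model R, blinded_trial m' /\ same_obs_law m m' /\ VE m' false = v) /\
  (forall v : R, L1 <= v <= R1 ->
     exists m' : F2model R, blinded_trial m' /\ same_obs_law m m' /\ VE m' true = v) /\
  (forall v : R, LT <= v <= RT ->
     exists m' : F2model R, blinded_trial m' /\ same_obs_law m m' /\ VE_T m' = v).
Proof.
move=> hbl hpi h100 h000 h110 h010 L0 R0 L1 R1 LT RT.
have hp := pA_gt0 hpi.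
have EYb a b : p_yb_a m true b a <= EYpot m a b <= 1 - p_yb_a m false b a.
  by apply/andP; split; [exact: EY_lo|exact: EY_hi].
split; first by apply: ve_valid; [exact: p_ge0|exact: EYb|exact: h100|exact: EYb].
split; first by apply: ve_valid; [exact: p_ge0|exact: EYb|exact: h110|exact: EYb].
split; first by apply: ve_valid; [exact: p_ge0|exact: EYb|exact: h100|exact: EYb].
split.
  move=> v hv; have [m' [h1 [h2 h3]]] := sharp (b1:=false) (b0:=false) hpi h100 hv.
  by exists m'.
split.
  move=> v hv; have [m' [h1 [h2 h3]]] := sharp (b1:=true) (b0:=true) hpi h110 hv.
  by exists m'.
move=> v hv; have [m' [h1 [h2 h3]]] := sharp (b1:=true) (b0:=false) hpi h100 hv.
by exists m'.
Qed.
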